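(* Let $X,Y$ be Banach spaces, $\bar x\in X$, and let $A\in\mathcal L(X,Y)$ be surjective. For every $h>0$ let $X_h\subset X$, $Y_h\subset Y$ be closed subspaces (with the induced norms), let $F_h\colon X_h\to Y_h$ be continuous and let $\tilde x_h\in X_h$. Assume: (i) $\epsilon_h:=\|F_h(\tilde x_h)\|_Y+\|\bar x-\tilde x_h\|_X\to0$ as $h\to0$; (ii) there exist $A_h\in\mathcal L(X_h,Y_h)$, $R>0$ and a function $c\colon(0,\infty)\times(0,\infty)\to[0,\infty)$, nondecreasing in each variable with $\lim_{(h,r)\to0}c(h,r)=0$, such that $\|F_h(x)-F_h(y)-A_h(x-y)\|_Y\le c(h,r)\|x-y\|_X$ for all $x,y\in B_{X_h}(\tilde x_h,r)$, all $0<r<R$ and all $h>0$; (iii) there exist $\widehat A_h\in\mathcal L(X,Y)$ with $\widehat A_h(X_h)\subset Y_h$ and $\widehat A_h^{-1}(Y_h)\subset X_h$, such that $\lim_{h\to0}\|A-\widehat A_h\|_{\mathcal L(X,Y)}=0$ and $\lim_{h\to0}\|A_h-\widehat A_h\|_{\mathcal L(X_h,Y_h)}=0$. Then there is $h_0>0$ such that for every $0<h\le h_0$ there exists $\bar x_h\in X_h$ with $F_h(\bar x_h)=0$, $$\|\bar x-\bar x_h\|_X\le\Big(1+\frac{2}{\mathfrak C_{X,Y}(A)}\Big)\|\bar x-\tilde x_h\|_X+\frac{2}{\mathfrak C_{X,Y}(A)}\|F_h(\tilde x_h)\|_Y,$$ and $\operatorname{sur}_{X_h,Y_h}(F_h;\bar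 x_h)\ge\frac12\mathfrak C_{X,Y}(A)$. Moreover, if $A$ is an isomorphism, there exist $0<h_1\le h_0$ and $r_1>0$ such that for every $0<h\le h_1$, $F_h$ is strongly metrically regular near $\bar x_h$ and $\bar x_h$ is the unique element of $B_X(\bar x,r_1)\cap X_h$ with $F_h(\bar x_h)=0$.
   Context: $B_X(x,r)$ denotes a closed ball. For $T\in\mathcal L(X,Y)$, the Banach constant $\mathfrak C_{X,Y}(T)$ is the supremum of all $\kappa>0$ with $B_Y(0,\kappa)\subset T(B_X(0,1))$ if $T$ is surjective, and $\mathfrak C_{X,Y}(T)=0$ otherwise. A continuous map $F\colon X\to Y$ is metrically regular near $\bar x$ if there exist $\kappa,R>0$ with $B_Y(F(x),\kappa r)\cap B_Y(F(\bar x),R)\subset F(B_X(x,r))$ for all $0<r\le R$, $x\in B_X(\bar x,R)$; $\operatorname{sur}_{X,Y}(F;\bar x)$ is the supremum of such $\kappa$. $F$ is strongly metrically regular near $\bar x$ if it is metrically regular near $\bar x$ and there are neighborhoods $U$ of $\bar x$ and $V$ of $F(\bar x)$ such that $F^{-1}(y)\cap U$ is a single point for every $y\in V$. For maps $X_h\to Y_h$ the same notions are used with $X_h,Y_h$ in place of $X,Y$. *)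

(* Defs.v *)
From HB Require Import structures.
From mathcomp Require Import all_boot all_order all_algebra.
From mathcomp Require Import all_classical all_reals all_analysis.
Set Implicit Arguments. Unset Strict Implicit. Unset Printing Implicit Defensive.
Import Order.TTheory GRing.Theory Num.Theory.
Import numFieldNormedType.Exports.
Local Open Scope classical_set_scope.
Local Open Scope ring_scope.

Section Defs.
Context {R : realType}.

Definition closed_subspace (V : normedModType R) (S : set V) : Prop :=
  closed S /\ S 0 /\ (forall (a : R) (x y : V), S x -> S y -> S (a *: x + y)).

(* T is a bounded linear operator from the subspace D of U into the subspace
   E of V, i.e. an element of L(D, E) (only its values on D matter). *)
Definition sub_op (U V : normedModType R) (D : set U) (E : set V) (T : U -> V) :
  Prop :=
  (forall (a : R) (x y : U), D x -> D y -> T (a *: x + y) = a *: T x + T y) /\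
  (forall x, D x -> E (T x)) /\
  {within D, continuous T}.

Definition opnorm (U V : normedModType R) (D : set U) (T : U -> V) : R :=
  sup [set `|T x| | x in [set x | D x /\ `|x| <= 1]].

Definition banach_const (U V : normedModType R) (T : U -> V) : R :=
  if pselect (forall y : V, exists x : U, T x = y) then
    sup [set k : R | 0 < k /\
      [set y : V | `|y| <= k] `<=` T @` [set x : U | `|x| <= 1]]
  else 0.

Definition metreg_const (U V : normedModType R) (D : set U) (E : set V)
  (F : U -> V) (xb : U) (k : R) : Prop :=
  0 < k /\ exists Rr : R, 0 < Rr /\
   forall (r : R) (x : U), 0 < r -> r <= Rr -> D x -> `|x - xb| <= Rr ->
   forall y : V, E y -> `|y - F x| <= k * r -> `|y - F xb| <= Rr ->
   exists z : U, D z /\ `|z - x| <= r /\ F z = y.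

Definition metrically_regular (U V : normedModType R) (D : set U) (E : set V)
  (F : U -> V) (xb : U) : Prop :=
  exists k, metreg_const D E F xb k.

Definition sur (U V : normedModType R) (D : set U) (E : set V)
  (F : U -> V) (xb : U) : \bar R :=
  ereal_sup [set k%:E | k in [set k | metreg_const D E F xb k]].

(* Strong metric regularity near xb, for F : D -> E. Neighbourhoods in the
   subspaces are traces of neighbourhoods in the ambient spaces. *)
Definition strongly_metrically_regular (U V : normedModType R) (D : set U)
  (E : set V) (F : U -> V) (xb : U) : Prop :=
  metrically_regular D E F xb /\
  exists (N : set U) (M : set V), nbhs xb N /\ nbhs (F xb) M /\
    forall y, M y -> E y -> exists! x, (N x /\ D x) /\ F x = y.

Definition is_isomorphism (U V : normedModType R) (A : U -> V) : Prop :=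
  exists B : {linear V -> U}, continuous B /\ cancel A B /\ cancel B A.

End Defs.

(* Main.v *)
Require Import Defs.
From HB Require Import structures.
From mathcomp Require Import all_boot all_order all_algebra.
From mathcomp Require Import all_classical all_reals all_analysis.
Import Order.TTheory GRing.Theory Num.Theory.
Import numFieldNormedType.Exports.
Local Open Scope classical_set_scope.
Local Open Scope ring_scope.
From mathcomp Require Import ring lra.

Lemma geo_cauchy (R : realType) (X : completeNormedModType R) (y : nat -> X) (C q : R) :
  0 <= C -> 0 <= q < 1 -> (forall n m, `|y n - y (n + m)%N| <= C * q ^+ n) -> cvgn y.
Proof.
move=> C_ge0 /andP[q0 q1] H.
apply/cauchy_cvgP; apply/cauchy_ballP => _/posnumP[e]; near_simpl.
have lt_min n m : `|y n - y m| <= C * q ^+ minn n m.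
  wlog : n m / (n <= m)%N => W.
    by case/orP: (leq_total n m) => /W //; rewrite distrC minnC.
  by rewrite (minn_idPl _)// (le_trans _ (H _ (m - n)%N))// subnKC.
case: ltrgt0P C_ge0 => // [Cpos|C0] _; last first.
  near=> n m => /=; rewrite -ball_normE.
  by apply: (le_lt_trans (lt_min _ _)); rewrite C0 mul0r.
near=> n; rewrite -ball_normE /= (le_lt_trans (lt_min n.1 n.2)) //.
rewrite // -ltr_pdivlMl //.
suff : ball 0 (C^-1 * e%:num) (q ^+ minn n.1 n.2).
  by rewrite /ball /= sub0r normrN ger0_norm ?exprn_ge0.
near: n; rewrite nbhs_simpl.
pose g := fun w : nat * nat => q ^+ minn w.1 w.2.
have := @fcvg_ball _ _ (g @ filter_prod \oo \oo) _ 0 _ (C^-1 * e%:num).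
move: (@cvg_geometric _ 1 q); rewrite ger0_norm // => /(_ q1) geo.
near_simpl; apply; last by rewrite mulr_gt0 // invr_gt0.
apply/cvg_ballP => _/posnumP[delta]; near_simpl.
have [N _ Q] : \forall N \near \oo, ball 0 delta%:num (geometric 1 q N).
  exact: (@fcvg_ball R R _ _ 0 geo).
exists ([set n | N <= n], [set n | N <= n])%N; first by split; exists N.
move=> [n m] [Nn Nm]; rewrite /ball /= sub0r normrN ger0_norm /g ?exprn_ge0 //.
apply: le_lt_trans; last by apply: (Q N) => /=.
rewrite sub0r normrN ger0_norm /geometric ?exprn_ge0 //= mul1r.
by rewrite ler_wiXn2l // ?ltW // leq_min Nn.
by rewrite exprn_ge0.
Unshelve. all: end_near. Qed.

Lemma within_eps (R : realType) (X Y : normedModType R) (D : set X) (f : X -> Y) x :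
  {within D, continuous f} -> D x -> forall e : R, 0 < e ->
  exists2 d : R, 0 < d & forall z, D z -> `|x - z| < d -> `|f x - f z| < e.
Proof.
move=> /subspace_continuousP /(_ x) H Dx e e0.
have := H Dx; move/cvgrPdist_lt => /(_ e e0).
rewrite /within nearE => /nbhs_ballP [d d0 Hd]; exists d => // z Dz xz.
apply: (Hd z) => //; rewrite -ball_normE /=; done.
Qed.
Arguments within_eps {R X Y D f x}.
Lemma geo_small (R : realType) (c q e : R) : 0 <= q < 1 -> 0 < e ->
  exists N : nat, forall n, (N <= n)%N -> `|c * q ^+ n| < e.
Proof.
move=> /andP[q0 q1] e0.
have geo := @cvg_geometric R c q; rewrite ger0_norm // in geo.
have := (cvgrPdist_lt _ _).1 (geo q1) e e0.
move=> [N _ HN]; exists N => n Nn.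
have := HN n Nn; by rewrite /= sub0r normrN.
Qed.

Lemma cvgn_eps {R : realType} {X : normedModType R} {y : nat -> X} {z} :
  y @ \oo --> z -> forall e : R, 0 < e -> exists N : nat, forall n, (N <= n)%N -> `|z - y n| < e.
Proof.
move=> H e e0; have := (cvgrPdist_lt _ _).1 H e e0.
by move=> [N _ HN]; exists N => n Nn; exact: HN.
Qed.

Lemma graves (R : realType) (X : completeNormedModType R) (Y : normedModType R)
  (D : set X) (E : set Y) (T G : X -> Y) (x0 : X) (rho M th mu K : R) :
  closed D -> (forall x u, D x -> D u -> D (x + u)) ->
  (forall x y, D x -> E y -> E (y - G x)) ->
  {within D, continuous G} ->
  0 <= M -> 0 <= th -> 0 <= mu -> th + mu * M < 1 -> M <= K * (1 - (th + mu * M)) ->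
  (forall v, E v -> exists u, D u /\ `|u| <= M * `|v| /\ `|v - T u| <= th * `|v|) ->
  (forall x x', D x -> D x' -> `|x - x0| <= rho -> `|x' - x0| <= rho ->
      `|G x - G x' - T (x - x')| <= mu * `|x - x'|) ->
  forall x y, D x -> E y -> `|x - x0| + K * `|y - G x| <= rho ->
  exists z, D z /\ `|z - x| <= K * `|y - G x| /\ G z = y.
Proof.
move=> clD DD EG Gc M0 th0 mu0 q1 MK cov lip x y Dx Ey xr.
move: q1 MK; set q := th + mu * M => q1 MK.
set r0 := `|y - G x|.
have r00 : 0 <= r0 by rewrite /r0 normr_ge0.
have q0 : 0 <= q by rewrite addr_ge0 // mulr_ge0.
have K0 : 0 <= K by nra.
have [pick Hpick] : {pick : Y -> X & forall v, E v -> D (pick v) /\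
    `|pick v| <= M * `|v| /\ `|v - T (pick v)| <= th * `|v|}.
  apply: (@choice _ _ (fun v u => E v -> D u /\ `|u| <= M * `|v| /\ `|v - T u| <= th * `|v|)).
  move=> v; case: (pselect (E v)) => Ev.
    by have [u Hu] := cov v Ev; exists u.
  by exists 0.
pose f z := z + pick (y - G z).
pose s n := iter n f x.
have sS n : s n.+1 = s n + pick (y - G (s n)) by [].
have inv n : D (s n) /\ `|y - G (s n)| <= q ^+ n * r0 /\
    (1 - q) * `|s n - x| <= M * r0 * (1 - q ^+ n).
  elim: n => [|n [Dn [rn sn]]].
    by rewrite /s /= expr0 mul1r subrr normr0 mulr0 subrr mulr0.
  set u := pick (y - G (s n)).
  have Er : E (y - G (s n)) := EG _ _ Dn Ey.
  have [Du [uM ur]] := Hpick _ Er.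
  have Dn1 : D (s n.+1) by rewrite sS; apply: DD.
  have qn0 : 0 <= q ^+ n by rewrite exprn_ge0.
  have qn1 : q ^+ n <= 1 by rewrite exprn_ile1 // ltW.
  have snK : `|s n - x| <= K * r0.
    have h1 : 0 <= M * r0 * q ^+ n by rewrite !mulr_ge0.
    have h2 : M * r0 <= K * (1 - q) * r0 by rewrite ler_wpM2r.
    have : (1 - q) * `|s n - x| <= (1 - q) * (K * r0) by nra.
    by rewrite ler_pM2l // subr_gt0.
  have uM' : `|u| <= M * (q ^+ n * r0) by apply: (le_trans uM); rewrite ler_wpM2l.
  have tri : `|s n.+1 - x| <= `|s n - x| + `|u|.
    by rewrite sS addrAC; apply: ler_normD.
  have sn1 : (1 - q) * `|s n.+1 - x| <= M * r0 * (1 - q ^+ n.+1).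
    rewrite exprS.
    have h1 : (1 - q) * `|s n.+1 - x| <= (1 - q) * (`|s n - x| + `|u|).
      by rewrite ler_wpM2l // subr_ge0 ltW.
    have h2 : (1 - q) * `|u| <= (1 - q) * (M * (q ^+ n * r0)).
      by rewrite ler_wpM2l // subr_ge0 ltW.
    nra.
  have sn1K : `|s n.+1 - x| <= K * r0.
    have : (1 - q) * `|s n.+1 - x| <= (1 - q) * (K * r0).
      have : q ^+ n.+1 <= 1 by rewrite exprn_ile1 // ltW.
      have : 0 <= q ^+ n.+1 by rewrite exprn_ge0.
      have h1 : 0 <= M * r0 * q ^+ n.+1 by rewrite !mulr_ge0 ?exprn_ge0.
      have h2 : M * r0 <= K * (1 - q) * r0 by rewrite ler_wpM2r.
      nra.
    by rewrite ler_pM2l // subr_gt0.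
  have b1 : `|s n - x0| <= rho.
    rewrite (le_trans _ xr) //.
    rewrite -(subrK x (s n)) -addrA (le_trans (ler_normD _ _)) //.
    rewrite -/r0; lra.
  have b2 : `|s n.+1 - x0| <= rho.
    rewrite (le_trans _ xr) //.
    rewrite -(subrK x (s n.+1)) -addrA (le_trans (ler_normD _ _)) //.
    rewrite -/r0; lra.
  have dif : s n.+1 - s n = u by rewrite sS addrC addKr.
  have L := lip _ _ Dn1 Dn b2 b1.
  rewrite dif in L.
  have eq : y - G (s n.+1) = (y - G (s n) - T u) - (G (s n.+1) - G (s n) - T u).
    by rewrite (opprB (G (s n.+1) - G (s n))) addrA subrK opprB addrA subrK.
  split => //; split => //.
  rewrite eq (le_trans (ler_normB _ _)) //.
  rewrite -/u in ur.
  have h1 : th * `|y - G (s n)| <= th * (q ^+ n * r0) by rewrite ler_wpM2l.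
  have h2 : mu * `|u| <= mu * (M * (q ^+ n * r0)) by rewrite ler_wpM2l.
  rewrite exprS.
  have -> : q * q ^+ n * r0 = th * (q ^+ n * r0) + mu * (M * (q ^+ n * r0)).
    by rewrite /q; ring.
  lra.
have bnd k : `|s k - x| <= K * r0.
  have [_ [_ sk]] := inv k.
  have qk0 : 0 <= q ^+ k by rewrite exprn_ge0.
  have h1 : 0 <= M * r0 * q ^+ k by rewrite !mulr_ge0.
  have h2 : M * r0 <= K * (1 - q) * r0 by rewrite ler_wpM2r.
  have : (1 - q) * `|s k - x| <= (1 - q) * (K * r0) by nra.
  by rewrite ler_pM2l // subr_gt0.
have incr k : `|s k.+1 - s k| <= M * r0 * q ^+ k.
  have [Dk [rk _]] := inv k.
  have [_ [uM _]] := Hpick _ (EG _ _ Dk Ey).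
  rewrite sS addrC addKr (le_trans uM) //.
  by rewrite -mulrA [r0 * _]mulrC ler_wpM2l.
have cauch n m : (1 - q) * `|s n - s (n + m)%N| <= M * r0 * q ^+ n * (1 - q ^+ m).
  elim: m => [|m IH]; first by rewrite addn0 subrr normr0 expr0 subrr !mulr0.
  rewrite addnS.
  have t : `|s n - s (n+m).+1| <= `|s n - s (n+m)%N| + `|s (n+m).+1 - s (n+m)%N|.
    by rewrite (distrC (s (n+m).+1)); exact: ler_distD.
  have := incr (n+m)%N; rewrite exprD => i2.
  have i3 : (1 - q) * `|s n - s (n+m).+1| <= (1 - q) * (`|s n - s (n+m)%N| + `|s (n+m).+1 - s (n+m)%N|).
    by rewrite ler_wpM2l // subr_ge0 ltW.
  have i4 : (1 - q) * `|s (n+m).+1 - s (n+m)%N| <= (1 - q) * (M * r0 * (q ^+ n * q ^+ m)).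
    by rewrite ler_wpM2l // subr_ge0 ltW.
  rewrite exprS.
  have -> : M * r0 * q ^+ n * (1 - q * q ^+ m) =
     M * r0 * q ^+ n * (1 - q ^+ m) + (1 - q) * (M * r0 * (q ^+ n * q ^+ m)) by ring.
  lra.
have q1' : 0 < 1 - q by rewrite subr_gt0.
have hcvg : cvgn s.
  apply: (@geo_cauchy _ _ s (M * r0 / (1 - q)) q).
  - by rewrite !mulr_ge0 // invr_ge0 ltW.
  - by rewrite q0 q1.
  move=> n m; rewrite -(ler_pM2l q1').
  have -> : (1 - q) * (M * r0 / (1 - q) * q ^+ n) = M * r0 * q ^+ n.
    by field; rewrite gt_eqF.
  apply: (le_trans (cauch n m)).
  have : 0 <= M * r0 * q ^+ n by rewrite !mulr_ge0 ?exprn_ge0.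
  have : 0 <= q ^+ m by rewrite exprn_ge0.
  nra.
set z := limn s.
have hz : s @ \oo --> z by exact: hcvg.
have Dz : D z.
  apply: (closed_cvg D clD _ _ hz).
  by apply: nearW => n; exact: (inv n).1.
exists z; split => //; split.
  apply/ler_addgt0Pr => e e0.
  have [N HN] := cvgn_eps hz _ e0.
  have := HN N (leqnn N); have := bnd N.
  have : `|z - x| <= `|z - s N| + `|s N - x|.
    exact: ler_distD.
  lra.
apply/eqP; rewrite -subr_eq0 -normr_le0.
apply/ler_addgt0Pr => e e0; rewrite add0r.
have e2 : 0 < e / 2 by rewrite divr_gt0.
have [d d0 Hd] := within_eps Gc Dz _ e2.
have [N1 HN1] := cvgn_eps hz _ d0.
have [N2 HN2] := @geo_small _ r0 q (e/2) (ltac:(by rewrite q0 q1) : 0 <= q < 1) e2.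
set n := maxn N1 N2.
have := HN1 n (leq_maxl _ _); move/(Hd _ (inv n).1) => g1.
have := HN2 n (leq_maxr _ _); rewrite ger0_norm ?mulr_ge0 ?exprn_ge0 // => g2.
have [_ [g3 _]] := inv n.
have : `|G z - y| <= `|G z - G (s n)| + `|y - G (s n)|.
  by rewrite (distrC y); exact: ler_distD.
rewrite mulrC in g2.
lra.
Qed.

Lemma zid (V : zmodType) (a b c d : V) : d - (b - c) = (a + d - b) - (a - c).
Proof.
rewrite (opprB a c) -addrA (addrC a d) -addrA (addrCA a) (addrC a (c - a)) subrK.
by rewrite opprB (addrC (- b)).
Qed.

Lemma closure_eps (R : realType) (Y : normedModType R) (B : set Y) p e :
  closure B p -> 0 < e -> exists b, B b /\ `|p - b| < e.
Proof.
move=> /(_ _ (nbhsx_ballx p e _)) H e0; have [b [Bb pb]] := H e0.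
by exists b; split => //; move: pb; rewrite -ball_normE.
Qed.

Arguments closure_eps {R Y B p e}.
Lemma baire_step (R : realType) (X Y : completeNormedModType R) (A : {linear X -> Y}) :
  (forall y : Y, exists x : X, A x = y) ->
  exists (n : nat) (r : R), 0 < r /\ forall v : Y, `|v| < r -> forall e : R, 0 < e ->
    exists u : X, `|u| <= (2 * n%:R) /\ `|v - A u| < e.
Proof.
move=> surj.
pose S (n : nat) := closure (A @` [set x : X | `|x| <= n%:R]).
pose O (n : nat) := ~` S n.
have [i ndi] : exists i, ~ dense (O i).
  apply: contrapT => Hn.
  have Hd : forall i, open (O i) /\ dense (O i).
    move=> i; split; first exact/closed_openC/closed_closure.
    by apply: contrapT => H; apply: Hn; exists i.
  have [a [_ Ha]] := Baire Hd (ltac:(by exists (0 : Y)) : [set: Y] !=set0) openT.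
  have [x Ax] := surj a.
  have := Ha (Num.Def.trunc `|x|).+1 Logic.I; apply.
  apply: subset_closure; exists x => //.
  exact/ltW/truncnS_gt.
case: (denseNE ndi) => O0 [[x /open_nbhs_nbhs /nbhs_ballP [r r0 Hr]] HO].
have inS : forall w, ball x r w -> S i w.
  move=> w /Hr O0w; apply: contrapT => nS.
  have : (O0 `&` O i) w by split.
  by rewrite HO.
exists i, r; split => // v vr e e0.
have e2 : 0 < e / 2 by rewrite divr_gt0.
have b1 : ball x r (x + v).
  by rewrite -ball_normE /= opprD addrA subrr sub0r normrN.
have b2 : ball x r x by exact: ballxx.
have [_ [[x1 x1n <-] d1]] := closure_eps (inS _ b1) e2.
have [_ [[x2 x2n <-] d2]] := closure_eps (inS _ b2) e2.
exists (x1 - x2); split.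
  rewrite /= in x1n x2n.
  by rewrite (le_trans (ler_normB _ _)) // mulr2n mulrDl mul1r lerD.
rewrite linearB /=.
have -> : v - (A x1 - A x2) = (x + v - A x1) - (x - A x2).
  exact: zid.
rewrite (le_lt_trans (ler_normB _ _)) //.
by rewrite (splitr e) ltrD.
Qed.

Lemma open_mapping (R : realType) (X Y : completeNormedModType R) (A : {linear X -> Y}) :
  continuous A -> (forall y : Y, exists x : X, A x = y) ->
  exists K : R, 0 < K /\ forall y, exists x, A x = y /\ `|x| <= K * `|y|.
Proof.
move=> Ac surj.
have [n [r [r0 Hb]]] := @baire_step _ _ _ A surj.
set M := (4 * n%:R + 1) / r.
have M0 : 0 < M by rewrite /M divr_gt0 // ltr_wpDl // mulr_ge0.
have cov : forall v : Y, [set: Y] v -> exists u : X, [set: X] u /\ `|u| <= M * `|v| /\ `|v - A u| <= 2^-1 * `|v|.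
  move=> v _.
  have [->|vn0] := eqVneq v 0.
    by exists 0; rewrite linear0 !normr0 subrr normr0 !mulr0.
  have nv : 0 < `|v| by rewrite normr_gt0.
  set c := r / (2 * `|v|).
  have c0 : 0 < c by rewrite divr_gt0 // mulr_gt0.
  have wr : `|c *: v| < r.
    rewrite normrZ gtr0_norm // /c -mulrA gtr_pMr // invfM -mulrA mulVf ?gt_eqF // mulr1.
    by rewrite invf_lt1 // ltr1n.
  have r4 : 0 < r / 4 by rewrite divr_gt0.
  have [u' [u'n u'w]] := Hb _ wr _ r4.
  exists (c^-1 *: u'); split => //; split.
    rewrite normrZ gtr0_norm ?invr_gt0 //.
    apply: (le_trans (ler_wpM2l _ u'n)); first by rewrite invr_ge0 ltW.
    have -> : M * `|v| = c^-1 * (2 * n%:R) + `|v| / r.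
      by rewrite /M /c; field; rewrite ?gt_eqF.
    by rewrite lerDl divr_ge0 // ltW.
  have -> : v - A (c^-1 *: u') = c^-1 *: (c *: v - A u').
    by rewrite linearZ /= scalerBr scalerA mulVf ?gt_eqF // scale1r.
  rewrite normrZ gtr0_norm ?invr_gt0 //.
  apply: (le_trans (ler_wpM2l _ (ltW u'w))); first by rewrite invr_ge0 ltW.
  have -> : c^-1 * (r / 4) = 2^-1 * `|v|.
    by rewrite /c; field; rewrite ?gt_eqF.
  by [].
exists (2 * M); split; first by rewrite mulr_gt0.
move=> y.
have := @graves R X Y setT setT A A 0 (2 * M * `|y|) M (2^-1) 0 (2 * M) closedT
  (fun _ _ _ _ => Logic.I) (fun _ _ _ _ => Logic.I) (continuous_subspaceT Ac) (ltW M0)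
  (ltac:(by rewrite invr_ge0)) (lexx 0).
rewrite mul0r addr0 invf_lt1 ?ltr1n // => /(_ erefl).
have h : M <= 2 * M * (1 - 2^-1).
  have -> : 2 * M * (1 - 2^-1) = M by field.
  by [].
move=> /(_ h cov) Hg.
have lip : forall x x' : X, [set: X] x -> [set: X] x' -> `|x - 0| <= 2 * M * `|y| ->
   `|x' - 0| <= 2 * M * `|y| -> `|A x - A x' - A (x - x')| <= 0 * `|x - x'|.
  by move=> x x' _ _ _ _; rewrite -linearB subrr normr0 mul0r.
have bd : `|(0:X) - 0| + 2 * M * `|y - A 0| <= 2 * M * `|y|.
  by rewrite subrr normr0 add0r linear0 subr0.
have [z [_ [zn Az]]] := Hg lip 0 y Logic.I Logic.I bd.
exists z; split => //.
by move: zn; rewrite subr0 linear0 subr0.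
Qed.
Lemma scale_norm (R : realType) (V : normedModType R) (y : V) (k : R) :
  0 <= k -> y != 0 -> `|(k / `|y|) *: y| = k.
Proof.
move=> k0 y0; have ny : 0 < `|y| by rewrite normr_gt0.
rewrite normrZ ger0_norm; last by rewrite divr_ge0.
by rewrite -mulrA mulVf ?mulr1 // gt_eqF.
Qed.

Lemma bc_facts (R : realType) (X Y : completeNormedModType R) (A : {linear X -> Y}) :
  continuous A -> (forall y : Y, exists x : X, A x = y) -> (exists y0 : Y, y0 != 0) ->
  0 < banach_const A /\ forall c, 0 < c -> c < banach_const A ->
    forall y, exists x, A x = y /\ c * `|x| <= `|y|.
Proof.
move=> Ac surj [y0 y00].
rewrite /banach_const; destruct pselect as [pp|nn]; last by case: (nn surj).
set S := [set k : R | _].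
have [K [K0 HK]] := @open_mapping _ _ _ A Ac surj.
case: (linear_lipschitz Ac) => L L0 HL.
have SK : S K^-1.
  split; first by rewrite invr_gt0.
  move=> y /= yK; have [x [Ax xn]] := HK y; exists x => //=.
  apply: (le_trans xn); have := ler_wpM2l (ltW K0) yK.
  by rewrite mulfV // gt_eqF.
have nY : 0 < `|y0| by rewrite normr_gt0.
have ubS : ubound S L.
  move=> k [k0 Hk].
  have : `|(k / `|y0|) *: y0| <= k by rewrite scale_norm // ltW.
  move/Hk => [x /= x1 Axe].
  have : `|(k / `|y0|) *: y0| = k by rewrite scale_norm // ltW.
  rewrite -Axe => <-.
  apply: (le_trans (HL x)); rewrite -[leRHS]mulr1 ler_wpM2l // ltW //.
have hs : has_sup S by split; [exists K^-1 | exists L].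
split.
  apply: (lt_le_trans (_ : 0 < K^-1)); first by rewrite invr_gt0.
  exact: sup_upper_bound.
move=> c c0 cS.
have [k Sk ck] := sup_adherent (ltac:(by rewrite subr_gt0) : 0 < sup S - c) hs.
rewrite opprB addrCA subrr addr0 in ck.
case: Sk => k0 Hk.
move=> y.
have [->|yn0] := eqVneq y 0.
  by exists 0; rewrite linear0 !normr0 mulr0.
have ny : 0 < `|y| by rewrite normr_gt0.
have : `|(k / `|y|) *: y| <= k by rewrite scale_norm // ltW.
move/Hk => [x' /= x1 Ax'].
exists ((`|y| / k) *: x'); split.
  rewrite linearZ /= Ax' scalerA.
  have -> : `|y| / k * (k / `|y|) = 1 by field; rewrite ?gt_eqF.
  by rewrite scale1r.
rewrite normrZ ger0_norm; last by rewrite divr_ge0 // ltW.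
have : c * (`|y| / k * `|x'|) <= k * (`|y| / k * `|x'|).
  by apply: ler_wpM2r; [rewrite mulr_ge0 // divr_ge0 // ltW | exact: ltW].
have -> : k * (`|y| / k * `|x'|) = `|y| * `|x'| by field; rewrite gt_eqF.
move=> HH; apply: (le_trans HH).
by rewrite -[leRHS]mulr1 ler_wpM2l.
Qed.
Section SubLemmas.
Local Set Implicit Arguments.
Context {R : realType} {U V : normedModType R}.

Lemma cs_scale (D : set U) a x : closed_subspace D -> D x -> D (a *: x).
Proof. by move=> [_ [D0 Dl]] Dx; rewrite -[a *: x]addr0; apply: Dl. Qed.

Lemma cs_add (D : set U) x y : closed_subspace D -> D x -> D y -> D (x + y).
Proof. by move=> [_ [D0 Dl]] Dx Dy; rewrite -[x]scale1r; apply: Dl. Qed.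

Lemma cs_sub (D : set U) x y : closed_subspace D -> D x -> D y -> D (x - y).
Proof.
move=> [_ [D0 Dl]] Dx Dy; rewrite addrC -scaleN1r; exact: Dl.
Qed.

Lemma cs_0 (D : set U) : closed_subspace D -> D 0.
Proof. by move=> [_ []]. Qed.

Lemma so_0 (D : set U) (E : set V) T : closed_subspace D -> sub_op D E T -> T 0 = 0.
Proof.
move=> cD [lin _]; have := lin 1 0 0 (cs_0 cD) (cs_0 cD).
rewrite scale1r addr0 => /(congr1 (fun v => v - T 0)) /=.
by rewrite subrr addrK scale1r => ->.
Qed.

Lemma so_scale (D : set U) (E : set V) T a x : closed_subspace D -> sub_op D E T -> D x ->
  T (a *: x) = a *: T x.
Proof.
move=> cD sT Dx; have [lin _] := sT.
by have := lin a x 0 Dx (cs_0 cD); rewrite !addr0 (so_0 cD sT) addr0.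
Qed.

Lemma so_sub (D : set U) (E : set V) T x y : closed_subspace D -> sub_op D E T -> D x -> D y ->
  T (x - y) = T x - T y.
Proof.
move=> cD sT Dx Dy; have [lin _] := sT.
by have := lin (-1) y x Dy Dx; rewrite !scaleN1r addrC => ->; rewrite addrC.
Qed.

Lemma so_bounded (D : set U) (E : set V) T : closed_subspace D -> sub_op D E T ->
  exists2 k : R, 0 < k & forall x, D x -> `|T x| <= k * `|x|.
Proof.
move=> cD sT; have [_ [_ Tc]] := sT.
have [d d0 Hd] := within_eps Tc (cs_0 cD) _ ltr01.
exists (2 / d); first by rewrite divr_gt0.
move=> x Dx; have [->|xn0] := eqVneq x 0.
  by rewrite (so_0 cD sT) !normr0 mulr0.
have nx : 0 < `|x| by rewrite normr_gt0.
set a := d / (2 * `|x|).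
have a0 : 0 < a by rewrite divr_gt0 // mulr_gt0.
have Dz : D (a *: x) by exact: cs_scale.
have : `|0 - a *: x| < d.
  rewrite sub0r normrN normrZ gtr0_norm // /a.
  have -> : d / (2 * `|x|) * `|x| = d / 2 by field; rewrite gt_eqF.
  by rewrite gtr_pMr // invf_lt1 // ltr1n.
move/(Hd _ Dz); rewrite (so_0 cD sT) sub0r normrN (so_scale _ _ cD sT Dx) normrZ gtr0_norm //.
move=> H; have : `|T x| < a^-1 by rewrite -(ltr_pM2l a0) mulfV ?gt_eqF.
move/ltW/le_trans; apply; rewrite /a invf_div.
by rewrite mulrAC.
Qed.

Lemma opnorm_bound (D : set U) (T : U -> V) :
  (forall a x, D x -> D (a *: x)) -> (forall a x, D x -> T (a *: x) = a *: T x) ->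
  (exists k : R, forall x, D x -> `|T x| <= k * `|x|) ->
  forall x, D x -> `|T x| <= opnorm D T * `|x|.
Proof.
move=> Dsc Tsc [k Hk] x Dx.
set S := [set `|T x| | x in [set x | D x /\ `|x| <= 1]].
have ub : has_ubound S.
  exists (`|k|) => _ [z [Dz z1] <-].
  apply: (le_trans (Hk z Dz)); apply: (le_trans (ler_norm _)).
  by rewrite normrM normr_id -[leRHS]mulr1 ler_wpM2l.
have [->|xn0] := eqVneq x 0.
  have := Tsc 0 x Dx; rewrite !scale0r => ->; by rewrite !normr0 mulr0.
have nx : 0 < `|x| by rewrite normr_gt0.
have Sx : S `|T (`|x|^-1 *: x)|.
  exists (`|x|^-1 *: x) => //; split; first exact: Dsc.
  by rewrite normrZ ger0_norm ?invr_ge0 // mulVf // gt_eqF.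
have := ub_le_sup ub Sx.
rewrite Tsc // normrZ ger0_norm ?invr_ge0 //.
by rewrite ler_pdivrMl // mulrC.
Qed.

End SubLemmas.
Lemma right0_eps (R : realType) (f : R -> R) :
  f h @[h --> 0^'+] --> (0 : R) -> forall e : R, 0 < e ->
  exists2 d : R, 0 < d & forall h, 0 < h -> h < d -> `|f h| < e.
Proof.
move=> H e e0; have := (cvgrPdist_lt _ _).1 H e e0.
rewrite near_withinE nearE => HH. have := HH (at_right_proper_filter 0). move=> /nbhs_ballP [d d0 Hd]; exists d => // h h0 hd.
have := Hd h; rewrite -ball_normE /= sub0r normrN ger0_norm ?ltW // => /(_ hd h0).
by rewrite sub0r normrN.
Qed.
Lemma ereal_test (R : realType) (S : set R) k : S k -> ((k%:E) <= ereal_sup [set x%:E | x in S])%E.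
Proof. by move=> Sk; apply: ereal_sup_ubound; exists k. Qed.
Lemma trivial_case (R : realType) (X Y : completeNormedModType R)
  (xbar : X) (A : {linear X -> Y})
  (Xh : R -> set X) (Yh : R -> set Y) (F : R -> X -> Y) (xt : R -> X) :
  (forall h, 0 < h -> Xh h (xt h)) ->
  (forall y : Y, y = 0) ->
  exists (h0 : R) (xb : R -> X), 0 < h0 /\
    (forall h, 0 < h -> h <= h0 ->
       Xh h (xb h) /\ F h (xb h) = 0 /\
       `|xbar - xb h| <= (1 + 2 / banach_const A) * `|xbar - xt h|
                         + 2 / banach_const A * `|F h (xt h)| /\
       ((banach_const A / 2)%:E <= sur (Xh h) (Yh h) (F h) (xb h))%E) /\
    (is_isomorphism A ->
       exists h1 r1 : R, 0 < h1 /\ h1 <= h0 /\ 0 < r1 /\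
         forall h, 0 < h -> h <= h1 ->
           strongly_metrically_regular (Xh h) (Yh h) (F h) (xb h) /\
           `|xbar - xb h| <= r1 /\
           (forall z, Xh h z -> `|xbar - z| <= r1 -> F h z = 0 -> z = xb h)).
Proof.
move=> xtX Y0.
have C0 : banach_const A = 0.
  rewrite /banach_const; destruct pselect as [pp|nn] => //.
  apply: sup_out => -[_ [L HL]].
  have : [set k : R | 0 < k /\ [set y : Y | `|y| <= k] `<=` A @` [set x : X | `|x| <= 1]] (`|L| + 1).
    split; first by rewrite ltr_wpDl.
    by move=> y _; exists 0; [rewrite /= normr0 | rewrite linear0 (Y0 y)].
  move/HL; apply/negP; rewrite -ltNge.
  by apply: (le_lt_trans (ler_norm L)); rewrite ltrDl.
have mr : forall h, metreg_const (Xh h) (Yh h) (F h) (xt h) 1.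
  move=> h; split => //; exists 1; split => // r x r0 _ Xx _ y _ _ _.
  by exists x; split => //; rewrite subrr normr0 ltW //; rewrite (Y0 y) (Y0 (F h x)).
have surge : forall h, ((0:R)%:E <= sur (Xh h) (Yh h) (F h) (xt h))%E.
  move=> h; apply: (@le_trans _ _ (1%:E)); first by rewrite lee_fin.
  by apply: ereal_sup_ubound; exists 1 => //; exact: mr.
exists 1, xt; split => //; split.
  move=> h h0 _; split; first exact: xtX.
  split; first exact: Y0.
  rewrite C0 invr0 mulr0 addr0 mul0r addr0 mul1r; split => //.
  by rewrite mul0r; exact: surge.
move=> [B [_ [AB _]]].
have X0 : forall x : X, x = 0.
  by move=> x; rewrite -(AB x) (Y0 (A x)) -(Y0 (A 0)) AB.
exists 1, 1; do 3!split => //.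
move=> h h0 _; split.
  split; first by exists 1; exact: mr.
  exists setT, setT; split; first exact: filterT.
  split; first exact: filterT.
  move=> y _ _; exists (xt h); split.
    by split; [split => //; exact: xtX | rewrite (Y0 y) (Y0 (F h _))].
  by move=> x' _; rewrite (X0 x') (X0 (xt h)).
split; first by rewrite (X0 xbar) (X0 (xt h)) subrr normr0.
by move=> z _ _ _; rewrite (X0 z) (X0 (xt h)).
Qed.
Lemma per_h (R : realType) (X Y : completeNormedModType R) (A : {linear X -> Y})
  (D : set X) (E : set Y) (F Ah : X -> Y) (Ahat : {linear X -> Y}) (xt : X)
  (C e rho ch : R) :
  continuous A -> continuous Ahat -> closed_subspace D -> closed_subspace E ->
  {within D, continuous F} -> (forall x, D x -> E (F x)) -> sub_op D E Ah ->
  (forall x, E (Ahat x) -> D x) ->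
  0 < C -> 0 < e -> 16 * e <= C ->
  (forall y, exists x, A x = y /\ (3 * C / 4) * `|x| <= `|y|) ->
  `|opnorm setT (fun x => A x - Ahat x)| < e ->
  `|opnorm D (fun x => Ah x - Ahat x)| < e ->
  0 <= ch -> ch <= e ->
  (forall x y, D x -> `|x - xt| <= rho -> D y -> `|y - xt| <= rho ->
        `|F x - F y - Ah (x - y)| <= ch * `|x - y|) ->
  (forall x, `|A x - Ahat x| <= e * `|x|) /\
  (forall x x', D x -> D x' -> `|x - xt| <= rho -> `|x' - xt| <= rho ->
        `|F x - F x' - Ahat (x - x')| <= 2 * e * `|x - x'|) /\
  (forall x y, D x -> E y -> `|x - xt| + 2 / C * `|y - F x| <= rho ->
        exists z, D z /\ `|z - x| <= 2 / C * `|y - F x| /\ F z = y).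
Proof.
move=> Ac Ahc cD cE Fc FE Ahop AhY C0 e0 eC cov n1 n2 ch0 che lip.
have close : forall x, `|A x - Ahat x| <= e * `|x|.
  move=> x.
  have := @opnorm_bound R X Y setT (fun x => A x - Ahat x) (fun _ _ _ => Logic.I).
  move=> /(_ _ _ x Logic.I) H.
  apply: (le_trans (H _ _)).
  - by move=> a z _ /=; rewrite (linearZZ A) (linearZZ Ahat) scalerBr.
  - case: (linear_lipschitz Ac) => kA _ HA; case: (linear_lipschitz Ahc) => kH _ HH.
    exists (kA + kH) => z _; apply: (le_trans (ler_normB _ _)).
    by rewrite mulrDl lerD.
  apply: ler_wpM2r => //; exact: (le_trans (ler_norm _) (ltW n1)).
have closeD : forall x, D x -> `|Ah x - Ahat x| <= e * `|x|.
  move=> x Dx.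
  have := @opnorm_bound R X Y D (fun x => Ah x - Ahat x).
  move=> /(_ (fun a z Dz => cs_scale a z cD Dz)) H.
  apply: (le_trans (H _ _ x Dx)).
  - by move=> a z Dz; rewrite /= (linearZZ Ahat) (so_scale _ _ cD Ahop Dz) scalerBr.
  - have [kA _ HA] := so_bounded cD Ahop; case: (linear_lipschitz Ahc) => kH _ HH.
    exists (kA + kH) => z Dz; apply: (le_trans (ler_normB _ _)).
    by rewrite mulrDl lerD // HA.
  apply: ler_wpM2r => //; exact: (le_trans (ler_norm _) (ltW n2)).
split => //.
have lipF : forall x x', D x -> D x' -> `|x - xt| <= rho -> `|x' - xt| <= rho ->
        `|F x - F x' - Ahat (x - x')| <= 2 * e * `|x - x'|.
  move=> x x' Dx Dx' bx bx'.
  have -> : F x - F x' - Ahat (x - x') = (F x - F x' - Ah (x - x')) + (Ah (x - x') - Ahat (x - x')).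
    by rewrite addrA subrK.
  apply: (le_trans (ler_normD _ _)).
  have h1 := lip _ _ Dx bx Dx' bx'.
  have h2 := closeD _ (cs_sub _ _ cD Dx Dx').
  have h3 : ch * `|x - x'| <= e * `|x - x'| by rewrite ler_wpM2r.
  lra.
split => //.
set K1 := 3 / (2 * C).
have K10 : 0 < K1 by rewrite /K1 divr_gt0 // mulr_gt0.
have covH : forall y, exists z, Ahat z = y /\ `|z| <= K1 * `|y|.
  move=> y.
  set M0 := 4 / (3 * C).
  have M00 : 0 < M0 by rewrite /M0 divr_gt0 // mulr_gt0.
  have eM : e * M0 <= 12^-1.
    have he : e <= C / 16 by lra.
    rewrite (_ : 12^-1 = C / 16 * M0); last by rewrite /M0; field; rewrite gt_eqF.
    by rewrite ler_wpM2r // ltW.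
  have iC0 : 0 < (24 * C)^-1 by rewrite invr_gt0 mulr_gt0.
  have MK : M0 <= K1 * (1 - (0 + e * M0)).
    apply: (@le_trans _ _ (K1 * (11/12))).
      have -> : K1 * (11/12) = M0 + (24 * C)^-1 by rewrite /K1 /M0; field; rewrite gt_eqF.
      by rewrite lerDl ltW.
    apply: ler_wpM2l; [exact: ltW | lra].
  have q1 : 0 + e * M0 < 1 by lra.
  have covA : forall v : Y, [set: Y] v -> exists u : X, [set: X] u /\ `|u| <= M0 * `|v| /\ `|v - A u| <= 0 * `|v|.
    move=> v _; have [x [Ax xv]] := cov v; exists x; split => //; split.
      have -> : `|x| = M0 * (3 * C / 4 * `|x|) by rewrite /M0; field; rewrite gt_eqF.
      by rewrite ler_wpM2l // ltW.
    by rewrite Ax subrr normr0 mul0r.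
  have lipA : forall x x' : X, [set: X] x -> [set: X] x' -> `|x - 0| <= K1 * `|y| ->
      `|x' - 0| <= K1 * `|y| -> `|Ahat x - Ahat x' - A (x - x')| <= e * `|x - x'|.
    by move=> x x' _ _ _ _; rewrite -linearB distrC.
  have bd : `|(0:X) - 0| + K1 * `|y - Ahat 0| <= K1 * `|y|.
    by rewrite subrr normr0 add0r linear0 subr0.
  have [z [_ [zn Az]]] := @graves R X Y setT setT A Ahat 0 (K1 * `|y|) M0 0 e K1 closedT
    (fun _ _ _ _ => Logic.I) (fun _ _ _ _ => Logic.I) (continuous_subspaceT Ahc) (ltW M00)
    (lexx 0) (ltW e0) q1 MK covA lipA 0 y Logic.I Logic.I bd.
  exists z; split => //.
  by move: zn; rewrite subr0 linear0 subr0.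
have eK : 0 + 2 * e * K1 <= 3/16.
  have he : e <= C / 16 by lra.
  rewrite add0r (_ : 3/16 = 2 * (C / 16) * K1); last by rewrite /K1; field; rewrite gt_eqF.
  apply: ler_wpM2r; [exact: ltW | lra].
have q1 : 0 + 2 * e * K1 < 1 by lra.
have MK : K1 <= 2 / C * (1 - (0 + 2 * e * K1)).
  apply: (@le_trans _ _ (2 / C * (13/16))).
    have -> : 2 / C * (13/16) = K1 + (8 * C)^-1 by rewrite /K1; field; rewrite gt_eqF.
    by rewrite lerDl invr_ge0 mulr_ge0 // ltW.
  apply: ler_wpM2l; [by rewrite divr_ge0 // ltW | lra].
have covD : forall v, E v -> exists u, D u /\ `|u| <= K1 * `|v| /\ `|v - Ahat u| <= 0 * `|v|.
  move=> v Ev; have [z [Az zn]] := covH v; exists z; split.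
    by apply: AhY; rewrite Az.
  by rewrite Az subrr normr0 mul0r.
have [clD _] := cD.
move=> x y Dx Ey bd.
have := @graves R X Y D E Ahat F xt rho K1 0 (2 * e) (2 / C) clD
  (fun x u Dx Du => cs_add x u cD Dx Du)
  (fun x y Dx Ey => cs_sub y (F x) cE Ey (FE x Dx)) Fc (ltW K10) (lexx 0)
  (ltac:(by rewrite mulr_ge0 // ltW)) q1 MK covD lipF x y Dx Ey bd.
by [].
Qed.

Theorem mainTheorem3 (R : realType) (X Y : completeNormedModType R)
  (xbar : X) (A : {linear X -> Y})
  (Xh : R -> set X) (Yh : R -> set Y) (F : R -> X -> Y) (xt : R -> X) :
  continuous A ->
  (forall y : Y, exists x : X, A x = y) ->
  (forall h, 0 < h -> closed_subspace (Xh h)) ->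
  (forall h, 0 < h -> closed_subspace (Yh h)) ->
  (forall h, 0 < h -> {within Xh h, continuous F h}) ->
  (forall h, 0 < h -> forall x, Xh h x -> Yh h (F h x)) ->
  (forall h, 0 < h -> Xh h (xt h)) ->
  (* (i) *)
  (`|F h (xt h)| + `|xbar - xt h|) @[h --> 0^'+] --> (0 : R) ->
  (* (ii) *)
  (exists (Ah : R -> X -> Y) (R0 : R) (c : R -> R -> R),
     (forall h, 0 < h -> sub_op (Xh h) (Yh h) (Ah h)) /\
     0 < R0 /\
     (forall h r, 0 < h -> 0 < r -> 0 <= c h r) /\
     (forall h h' r, 0 < h -> h <= h' -> 0 < r -> c h r <= c h' r) /\
     (forall h r r', 0 < h -> 0 < r -> r <= r' -> c h r <= c h r') /\
     (forall e : R, 0 < e -> exists d : R, 0 < d /\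
        forall h r, 0 < h -> h < d -> 0 < r -> r < d -> c h r < e) /\
     (forall h r, 0 < h -> 0 < r -> r < R0 ->
        forall x y, Xh h x -> `|x - xt h| <= r -> Xh h y -> `|y - xt h| <= r ->
        `|F h x - F h y - Ah h (x - y)| <= c h r * `|x - y|) /\
  (* (iii) *)
     (exists Ahat : R -> {linear X -> Y},
        (forall h, 0 < h -> continuous (Ahat h)) /\
        (forall h, 0 < h -> forall x, Xh h x -> Yh h (Ahat h x)) /\
        (forall h, 0 < h -> forall x, Yh h (Ahat h x) -> Xh h x) /\
        opnorm setT (fun x => A x - Ahat h x) @[h --> 0^'+] --> (0 : R) /\
        opnorm (Xh h) (fun x => Ah h x - Ahat h x) @[h --> 0^'+] --> (0 : R))) ->
  exists (h0 : R) (xb : R -> X), 0 < h0 /\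
    (forall h, 0 < h -> h <= h0 ->
       Xh h (xb h) /\ F h (xb h) = 0 /\
       `|xbar - xb h| <= (1 + 2 / banach_const A) * `|xbar - xt h|
                         + 2 / banach_const A * `|F h (xt h)| /\
       ((banach_const A / 2)%:E <= sur (Xh h) (Yh h) (F h) (xb h))%E) /\
    (is_isomorphism A ->
       exists h1 r1 : R, 0 < h1 /\ h1 <= h0 /\ 0 < r1 /\
         forall h, 0 < h -> h <= h1 ->
           strongly_metrically_regular (Xh h) (Yh h) (F h) (xb h) /\
           `|xbar - xb h| <= r1 /\
           (forall z, Xh h z -> `|xbar - z| <= r1 -> F h z = 0 -> z = xb h)).
Proof.
move=> Ac surj cX cY Fc FY xtX conv [Ah [R0 [c [Ahop [R00 [c0 [cmh [cmr [clim [lip [Ahat [Ahc [AhX [AhY [cv1 cv2]]]]]]]]]]]]]]].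
case: (pselect (exists y0 : Y, y0 != 0)) => [ny|ny]; last first.
  apply: trivial_case => // y; apply: contrapT => yn; apply: ny; exists y; exact/eqP.
have [C0 cov0] := @bc_facts _ _ _ A Ac surj ny.
set C := banach_const A.
have {}C0 : 0 < C := C0.
have {}cov0 : forall c, 0 < c -> c < C -> forall y, exists x, A x = y /\ c * `|x| <= `|y| := cov0.
have cov : forall y, exists x, A x = y /\ (3 * C / 4) * `|x| <= `|y|.
  by apply: cov0; lra.
have [e [e0 [eC eiso]]] : exists e : R, 0 < e /\ 16 * e <= C /\
    (is_isomorphism A -> forall x, 8 * e * `|x| <= `|A x|).
  case: (pselect (is_isomorphism A)) => [[B [Bc [AB BA]]]|ni]; last first.
    exists (C / 16); split; first by rewrite divr_gt0.
    by split; [lra | move=> /ni].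
  case: (linear_lipschitz Bc) => LB LB0 HB.
  set b := (8 * LB)^-1.
  have b0 : 0 < b by rewrite invr_gt0 mulr_gt0.
  exists (Num.min (C/16) b); split; first by rewrite lt_min b0 divr_gt0.
  split.
    have : Num.min (C/16) b <= C/16 by rewrite ge_min lexx.
    lra.
  move=> _ x.
  have h1 : 8 * Num.min (C / 16) b <= 8 * b by rewrite ler_pM2l // ge_min lexx orbT.
  apply: (le_trans (ler_wpM2r (normr_ge0 x) h1)).
  have := HB (A x); rewrite AB => hx.
  have -> : 8 * b = LB^-1 by rewrite /b invfM mulrA mulfV ?mul1r.
  by rewrite ler_pdivrMl // mulrC.
have [d [d0 cd]] := clim e e0.
set rho := Num.min R0 d / 2.
have mR : Num.min R0 d <= R0 by rewrite ge_min lexx.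
have md : Num.min R0 d <= d by rewrite ge_min lexx orbT.
have m0 : 0 < Num.min R0 d by rewrite lt_min R00 d0.
have rho0 : 0 < rho by rewrite divr_gt0.
have rhoR : rho < R0 by rewrite /rho; lra.
have rhod : rho < d by rewrite /rho; lra.
set eta := rho * C / (8 * (C + 1)).
have C10 : 0 < C + 1 by lra.
have eta0 : 0 < eta by rewrite /eta divr_gt0 ?mulr_gt0.
have etar : eta <= rho / 4.
  have -> : rho / 4 = eta + rho * (C + 2) / (8 * (C + 1)).
    by rewrite /eta; field; rewrite gt_eqF.
  by rewrite lerDl divr_ge0 ?mulr_ge0 ?ltW //; lra.
have etaK : 2 / C * eta <= rho / 4.
  have -> : rho / 4 = 2 / C * eta + rho * C / (4 * (C + 1)).
    by rewrite /eta; field; rewrite ?gt_eqF.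
  by rewrite lerDl divr_ge0 ?mulr_ge0 ?ltW //; lra.
have [d1 d10 H1] := @right0_eps _ _ cv1 e e0.
have [d2 d20 H2] := @right0_eps _ _ cv2 e e0.
have [d3 d30 H3] := @right0_eps _ _ conv eta eta0.
set h0 := Num.min (Num.min d1 d2) (Num.min d3 d) / 2.
have mm0 : 0 < Num.min (Num.min d1 d2) (Num.min d3 d).
  by rewrite !lt_min d10 d20 d30 d0.
have h00 : 0 < h0 by rewrite divr_gt0.
have hsmall : forall h, h <= h0 -> h < d1 /\ h < d2 /\ h < d3 /\ h < d.
  move=> h hh0.
  have hm : h < Num.min (Num.min d1 d2) (Num.min d3 d) by rewrite /h0 in hh0; lra.
  by move: hm; rewrite !lt_min => /andP[/andP[-> ->] /andP[-> ->]].
have P : forall h, 0 < h -> h <= h0 ->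
   (forall x, `|A x - Ahat h x| <= e * `|x|) /\
   (forall x x', Xh h x -> Xh h x' -> `|x - xt h| <= rho -> `|x' - xt h| <= rho ->
        `|F h x - F h x' - Ahat h (x - x')| <= 2 * e * `|x - x'|) /\
   (forall x y, Xh h x -> Yh h y -> `|x - xt h| + 2 / C * `|y - F h x| <= rho ->
        exists z, Xh h z /\ `|z - x| <= 2 / C * `|y - F h x| /\ F h z = y) /\
   `|F h (xt h)| < eta /\ `|xbar - xt h| < eta.
  move=> h hp hh0; have [hd1 [hd2 [hd3 hd]]] := hsmall h hh0.
  have := @per_h R X Y A (Xh h) (Yh h) (F h) (Ah h) (Ahat h) (xt h) C e rho (c h rho)
    Ac (Ahc h hp) (cX h hp) (cY h hp) (Fc h hp) (FY h hp) (Ahop h hp) (AhY h hp) C0 e0 eC cov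
    (H1 h hp hd1) (H2 h hp hd2) (c0 h rho hp rho0) (ltW (cd h rho hp hd rho0 rhod))
    (lip h rho hp rho0 rhoR).
  move=> [P1 [P2 P3]]; do 3!(split => //).
  have := H3 h hp hd3.
  have := ler_norm (`|F h (xt h)| + `|xbar - xt h|).
  have := normr_ge0 (F h (xt h)); have := normr_ge0 (xbar - xt h).
  lra.
have C2 : 0 < 2 / C by rewrite divr_gt0.
have [xb Hxb] : {xb : R -> X & forall h, 0 < h -> h <= h0 ->
    Xh h (xb h) /\ F h (xb h) = 0 /\ `|xb h - xt h| <= 2 / C * `|F h (xt h)|}.
  apply: (@choice _ _ (fun h x => 0 < h -> h <= h0 ->
    Xh h x /\ F h x = 0 /\ `|x - xt h| <= 2 / C * `|F h (xt h)|)).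
  move=> h; case: (pselect (0 < h /\ h <= h0)) => [[hp hh0]|nh]; last first.
    by exists 0 => a b; case: nh.
  have [_ [_ [G [sF _]]]] := P h hp hh0.
  have bd : `|xt h - xt h| + 2 / C * `|0 - F h (xt h)| <= rho.
    rewrite subrr normr0 add0r sub0r normrN.
    have : 2 / C * `|F h (xt h)| <= 2 / C * eta by rewrite ler_wpM2l ?ltW.
    lra.
  have [z [Xz [zn Fz]]] := G (xt h) 0 (xtX h hp) (cs_0 (cY h hp)) bd.
  by exists z => _ _; rewrite sub0r normrN in zn.
have Q : forall h, 0 < h -> h <= h0 ->
    `|xb h - xt h| <= rho / 4 /\ `|xbar - xt h| <= rho / 4 /\
    metreg_const (Xh h) (Yh h) (F h) (xb h) (C / 2).
  move=> h hp hh0.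
  have [_ [_ [G [sF sx]]]] := P h hp hh0.
  have [Xb [Fb bb]] := Hxb h hp hh0.
  have xbt : `|xb h - xt h| <= rho / 4.
    have : 2 / C * `|F h (xt h)| <= 2 / C * eta by rewrite ler_wpM2l ?ltW.
    lra.
  split => //; split; first lra.
  split; first by rewrite divr_gt0.
  exists (rho / 4); split; first by rewrite divr_gt0.
  move=> r x r0 rR Xx xr y Yy yFx yFb.
  have hr : 2 / C * `|y - F h x| <= r.
    have : 2 / C * `|y - F h x| <= 2 / C * (C / 2 * r) by apply: ler_wpM2l => //; exact: ltW.
    have -> : 2 / C * (C / 2 * r) = r by field; rewrite gt_eqF.
    by [].
  have bd : `|x - xt h| + 2 / C * `|y - F h x| <= rho.
    have : `|x - xt h| <= `|x - xb h| + `|xb h - xt h| by exact: ler_distD.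
    lra.
  have [z [Xz [zn Fz]]] := G x y Xx Yy bd.
  by exists z; split => //; split => //; lra.
exists h0, xb; split => //; split.
  move=> h hp hh0.
  have [Xb [Fb bb]] := Hxb h hp hh0.
  have [_ [_ mr]] := Q h hp hh0.
  do 2!(split => //); split.
    have : `|xbar - xb h| <= `|xbar - xt h| + `|xt h - xb h| by exact: ler_distD.
    rewrite distrC in bb.
    have : 0 <= 2 / C * `|xbar - xt h| by apply: mulr_ge0; [exact: ltW | exact: normr_ge0].
    rewrite mulrDl mul1r; lra.
  by apply: ereal_sup_ubound; exists (C / 2).
move=> iso; have Ainj := eiso iso.
exists h0, (rho / 2); split => //; split => //; split; first by rewrite divr_gt0.
move=> h hp hh0.
have [P1 [P2 [G [sF sx]]]] := P h hp hh0.
have [Xb [Fb bb]] := Hxb h hp hh0.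
have [xbt [xbart mr]] := Q h hp hh0.
have inj : forall x x', Xh h x -> Xh h x' -> `|x - xt h| <= rho -> `|x' - xt h| <= rho ->
    F h x = F h x' -> x = x'.
  move=> x x' Xx Xx' bx bx' Fxx.
  have L := P2 x x' Xx Xx' bx bx'.
  rewrite Fxx subrr sub0r normrN in L.
  have L2 := P1 (x - x').
  have L3 := Ainj (x - x').
  have L4 : `|A (x - x')| <= `|A (x - x') - Ahat h (x - x')| + `|Ahat h (x - x')|.
    by rewrite -{1}(subrK (Ahat h (x - x')) (A (x - x'))) ler_normD.
  have : 8 * e * `|x - x'| <= 3 * e * `|x - x'| by lra.
  move=> H; apply/eqP; rewrite -subr_eq0 -normr_le0.
  have hu := normr_ge0 (x - x').
  nra.
split.
  split; first by exists (C / 2).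
  exists (ball (xb h) (rho / 4)), (ball (F h (xb h)) (C * rho / 8)).
  split; first by apply: nbhsx_ballx; rewrite divr_gt0.
  split; first by apply: nbhsx_ballx; rewrite divr_gt0 ?mulr_gt0.
  move=> y My Yy.
  move: My; rewrite -ball_normE /= distrC => My.
  have hy : 2 / C * `|y - F h (xb h)| < rho / 4.
    have : 2 / C * `|y - F h (xb h)| < 2 / C * (C * rho / 8) by rewrite ltr_pM2l.
    have -> : 2 / C * (C * rho / 8) = rho / 4 by field; rewrite gt_eqF.
    by [].
  have bd : `|xb h - xt h| + 2 / C * `|y - F h (xb h)| <= rho by lra.
  have [z [Xz [zn Fz]]] := G (xb h) y Xb Yy bd.
  have Nz : ball (xb h) (rho / 4) z.
    by rewrite -ball_normE /= distrC; lra.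
  exists z; split; first by split.
  move=> x' [[Nx' Xx'] Fx'].
  move: Nx'; rewrite -ball_normE /= distrC => Nx'.
  apply: inj => //.
  - have : `|z - xt h| <= `|z - xb h| + `|xb h - xt h| by exact: ler_distD.
    lra.
  - have : `|x' - xt h| <= `|x' - xb h| + `|xb h - xt h| by exact: ler_distD.
    lra.
  - by rewrite Fz Fx'.
split.
  have : `|xbar - xb h| <= `|xbar - xt h| + `|xt h - xb h| by exact: ler_distD.
  rewrite distrC in xbt; lra.
move=> z Xz zr Fz.
apply: inj => //.
- have : `|z - xt h| <= `|z - xbar| + `|xbar - xt h| by exact: ler_distD.
  rewrite distrC in zr; lra.
- lra.
- by rewrite Fz Fb.
Qed.
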